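(* Let $n,k$ be positive integers and $G=G_{n,k}\le\mathrm{Aut}_{\mathrm{gr}}(\Bbbk_{-1}[u,v])$. Then $G$ contains no quasi-reflections if and only if $k\not\equiv2\pmod4$ and $\gcd(n,k)\le2$.
   Context: $\Bbbk$ is algebraically closed of characteristic $0$; $\Bbbk_{-1}[u,v]=\Bbbk\langle u,v\rangle/(vu+uv)$, with matrices $\begin{pmatrix}a&b\\c&d\end{pmatrix}$ acting by $u\mapsto au+cv$, $v\mapsto bu+dv$. With $\omega$ a primitive $(2nk)$th root of unity, $G_{n,k}$ is generated by $\mathrm{diag}(\omega^{2k},\omega^{-2k})$ and $\begin{pmatrix}0&\omega^n\\\omega^n&0\end{pmatrix}$. For a graded automorphism $g$, $\mathrm{Tr}(g)=\sum_i\mathrm{tr}(g|_{A_i})t^i$, and $g$ is a quasi-reflection if $\mathrm{Tr}(g)=\frac1{(1-t)(1-\lambda t)}$ for some $\lambda\ne1$. *)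

(* Defs.v *)
From HB Require Import structures.
From mathcomp Require Import all_boot all_order all_algebra.
Set Implicit Arguments. Unset Strict Implicit. Unset Printing Implicit Defensive.
Import Order.TTheory GRing.Theory Num.Theory.
Local Open Scope ring_scope.

Section SkewPoly.
Variable K : fieldType.

(* A homogeneous element of degree m of k_{-1}[u,v] is represented by its
   coefficient function x : nat -> K, where x i is the coefficient of the
   monomial u^i v^(m-i) (0 <= i <= m).  The degree m is carried separately. *)

(* Product of a degree-m element with a degree-p element, using
   u^i v^(m-i) * u^j v^(p-j) = (-1)^((m-i) j) u^(i+j) v^(m+p-i-j)
   (a consequence of vu = -uv). *)
Definition hmul (m p : nat) (x y : nat -> K) : nat -> K :=
  fun s => \sum_(i < m.+1) \sum_(j < p.+1)
             (if (i + j == s)%N then (-1) ^+ ((m - i) * j) * x i * y j else 0).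

Definition hone : nat -> K := fun s => if s == 0%N then 1 else 0.

(* Matrix (a b; c d) acts by u |-> a u + c v, v |-> b u + d v. *)
Definition img_u (g : 'M[K]_2) : nat -> K :=
  fun s => if s == 1%N then g 0 0 else if s == 0%N then g 1 0 else 0.
Definition img_v (g : 'M[K]_2) : nat -> K :=
  fun s => if s == 1%N then g 0 1 else if s == 0%N then g 1 1 else 0.

Fixpoint hpow1 (x : nat -> K) (i : nat) : nat -> K :=
  match i with
  | 0%N => hone
  | i'.+1 => hmul 1 i' x (hpow1 x i')
  end.

Definition mono_img (g : 'M[K]_2) (i j : nat) : nat -> K :=
  hmul i j (hpow1 (img_u g) i) (hpow1 (img_v g) j).

Definition trace_deg (g : 'M[K]_2) (m : nat) : K :=
  \sum_(i < m.+1) mono_img g i (m - i) i.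

(* quasi-reflection: Tr(g) = 1/((1-t)(1-lambda t)) for some lambda != 1,
   written coefficientwise: the coefficient of t^m on the right is
   sum_{i=0}^m lambda^i. *)
Definition quasi_reflection (g : 'M[K]_2) : Prop :=
  exists lam : K, lam != 1 /\
    forall m : nat, trace_deg g m = \sum_(i < m.+1) lam ^+ i.

Inductive gen_by (S : 'M[K]_2 -> Prop) : 'M[K]_2 -> Prop :=
| gen_one : gen_by S 1%:M
| gen_in g : S g -> gen_by S g
| gen_mul g h : gen_by S g -> gen_by S h -> gen_by S (g *m h)
| gen_inv g : gen_by S g -> gen_by S (invmx g).

Definition gen_diag (n k : nat) (w : K) : 'M[K]_2 :=
  \matrix_(i < 2, j < 2)
    (if i == j then (if (val i == 0)%N then w ^+ (2 * k) else w ^- (2 * k)) else 0).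

Definition gen_anti (n k : nat) (w : K) : 'M[K]_2 :=
  \matrix_(i < 2, j < 2) (if i == j then 0 else w ^+ n).

Definition G_nk (n k : nat) (w : K) : 'M[K]_2 -> Prop :=
  gen_by (fun g => g = gen_diag n k w \/ g = gen_anti n k w).

End SkewPoly.

(* Main.v *)
Require Import Defs.
From HB Require Import structures.
From mathcomp Require Import all_boot all_order all_algebra.
From mathcomp Require Import ring zify.
From Stdlib Require Import FunctionalExtensionality.
Import Order.TTheory GRing.Theory Num.Theory.

Section NT.
Local Open Scope nat_scope.
Lemma nt_diag n k a b c : 0 < n -> 0 < k -> gcdn n k <= 2 ->
  2 * n * k %| 2 * k * a + 2 * k * (n - 1) * b + 2 * n * c ->
  2 * n * k %| 2 * k * b + 2 * k * (n - 1) * a + 2 * n * c.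
Proof.
move=> hn hk hg hX.
have hX' : n * k %| k * a + k * (n - 1) * b + n * c.
  have E : 2 * k * a + 2 * k * (n - 1) * b + 2 * n * c = 2 * (k * a + k * (n - 1) * b + n * c) by ring.
  by move: hX; rewrite E -mulnA dvdn_pmul2l.
have hk1 : k %| n * c.
  have : k %| k * a + k * (n - 1) * b + n * c by apply: dvdn_trans hX'; apply: dvdn_mull.
  rewrite -addnA dvdn_addr; last by apply: dvdn_mulr.
  by rewrite dvdn_addr // -mulnA dvdn_mulr.
have hk2 : k %| gcdn n k * c.
  by rewrite muln_gcdl dvdn_gcd hk1 dvdn_mulr.
have hg2 : gcdn n k %| 2.
  have gp : 0 < gcdn n k by rewrite gcdn_gt0 hn.
  by case: (gcdn n k) hg gp => [|[|[|]]].
have hk3 : k %| 2 * c.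
  exact: dvdn_trans hk2 (dvdn_mul hg2 (dvdnn c)).
clear hX' hk1 hk2 hg hg2; move: hX; case: n hn => [//|n] _ hX.
rewrite subn1 /= in hX *.
have E : (2 * k * b + 2 * k * n * a + 2 * n.+1 * c) + (2 * k * a + 2 * k * n * b + 2 * n.+1 * c)
   = 2 * n.+1 * k * (a + b) + 2 * n.+1 * (2 * c) by ring.
rewrite -(dvdn_addr _ hX) addnC E dvdn_addr; last exact: dvdn_mulr.
by rewrite dvdn_pmul2l ?muln_gt0.
Qed.

Lemma nt_anti k c : k %| 2 * (2 * c + 1) -> ~~ (k %| 2 * c + 1) -> k %% 4 = 2.
Proof.
move=> h1 h2.
have o1 : odd (2 * c + 1) by rewrite oddD oddM.
case ok: (odd k).
  exfalso; move/negP: h2; apply; move: h1; rewrite Gauss_dvdr //.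
  by rewrite coprimen2 ok.
have hk : k = 2 * k./2 by rewrite -{1}(odd_double_half k) ok add0n mul2n.
move: h1; rewrite hk dvdn_pmul2l // => h1.
have ok2 : odd k./2.
  apply: negbNE; apply/negP => ev.
  have : 2 %| 2 * c + 1 by apply: dvdn_trans h1; rewrite dvdn2.
  by rewrite dvdn2 o1.
rewrite hk; set j := k./2 in ok2 *.
have := odd_double_half j; rewrite ok2 => hj.
lia.
Qed.

Lemma nt_gcd1 n k : 0 < n -> 0 < k ->
  2 * k * (n %/ gcdn n k) + 2 * n * (k %/ gcdn n k * (gcdn n k - 1)) = 2 * n * k.
Proof.
move=> hn hk.
have gp : 0 < gcdn n k by rewrite gcdn_gt0 hn.
have hn1 : n = n %/ gcdn n k * gcdn n k by rewrite divnK // dvdn_gcdl.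
have hk1 : k = k %/ gcdn n k * gcdn n k by rewrite divnK // dvdn_gcdr.
set g := gcdn n k in gp hn1 hk1 *.
set n1 := n %/ g in hn1 *. set k1 := k %/ g in hk1 *.
rewrite [in RHS]hn1 [in RHS]hk1 [X in 2 * X * n1]hk1 [X in 2 * X * (k1 * _)]hn1.
clearbody n1 k1 g. clear hn1 hk1.
case: g gp => [//|g] _; rewrite subn1 /=; ring.
Qed.

Lemma nt_gcd2 n k : 0 < n -> 0 < k -> 2 < gcdn n k ->
  ~~ (2 * n * k %| 2 * k * (2 * (n %/ gcdn n k))).
Proof.
move=> hn hk hg.
have hn1 : n = n %/ gcdn n k * gcdn n k by rewrite divnK // dvdn_gcdl.
have n1p : 0 < n %/ gcdn n k.
  by rewrite divn_gt0 ?gcdn_gt0 ?hn // dvdn_leq // dvdn_gcdl.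
set g := gcdn n k in hg hn1 n1p *.
set n1 := n %/ g in hn1 n1p *.
rewrite [X in 2 * X * k]hn1.
clearbody n1 g.
rewrite (_ : 2 * (n1 * g) * k = (2 * n1 * k) * g); last by ring.
rewrite (_ : 2 * k * (2 * n1) = (2 * n1 * k) * 2); last by ring.
rewrite dvdn_pmul2l ?muln_gt0 ?n1p ?hk //.
apply/negP => /dvdn_leq h; move: (h isT); lia.
Qed.

End NT.

Local Open Scope ring_scope.
Set Implicit Arguments. Unset Strict Implicit. Unset Printing Implicit Defensive.

Section Tr.
Variable K : fieldType.

Definition mono (s0 : nat) (a : K) : nat -> K := fun s => if s == s0 then a else 0.

Lemma sum_delta (m s : nat) (F : nat -> K) : (s <= m)%N ->
  \sum_(i < m.+1) (if (i:nat) == s then F i else 0) = F s.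
Proof. by move=> H; rewrite -big_mkcond big_ord1_eq ltnS H. Qed.

Lemma sum_deltac (m s : nat) (c : K) : (s <= m)%N ->
  \sum_(i < m.+1) (if (i:nat) == s then c else 0) = c.
Proof. by move=> H; rewrite (@sum_delta m s (fun _ => c)). Qed.

Lemma hmul_mono m p s1 s2 a b : (s1 <= m)%N -> (s2 <= p)%N ->
  hmul m p (mono s1 a) (mono s2 b) = mono (s1 + s2) ((-1) ^+ ((m - s1) * s2) * a * b).
Proof.
move=> h1 h2; apply: functional_extensionality => s.
rewrite /hmul.
rewrite (eq_bigr (fun i : 'I_m.+1 => if (i:nat) == s1 then
   \sum_(j < p.+1) (if (s1 + j == s)%N then (-1) ^+ ((m - s1) * j) * a * mono s2 b j else 0)
   else 0)); last first.
  move=> i _; rewrite /mono; case: (eqVneq (i:nat) s1) => [->|ne].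
    by apply: eq_bigr => j _.
  by apply: big1 => j _; case: ifP; rewrite ?mulr0 ?mul0r.
rewrite sum_deltac //.
rewrite (eq_bigr (fun j : 'I_p.+1 => if (j:nat) == s2 then
   (if (s1 + s2 == s)%N then (-1) ^+ ((m - s1) * s2) * a * b else 0) else 0)); last first.
  move=> j _; rewrite /mono; case: (eqVneq (j:nat) s2) => [->|ne].
    by [].
  by case: ifP; rewrite ?mulr0.
by rewrite sum_deltac // /mono eq_sym.
Qed.

Lemma hpow1_mono1 a i : hpow1 (mono 1 a) i = mono i (a ^+ i).
Proof.
elim: i => [|i IH] /=; first by rewrite expr0.
by rewrite IH hmul_mono // subnn mul0n expr0 mul1r exprS.
Qed.

Lemma hpow1_mono0 a i : hpow1 (mono 0 a) i = mono 0 (a ^+ i).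
Proof.
elim: i => [|i IH] /=; first by rewrite expr0.
by rewrite IH hmul_mono // muln0 expr0 mul1r exprS.
Qed.

Definition Dg (x y : K) : 'M[K]_2 :=
  \matrix_(i < 2, j < 2) (if i == j then (if (val i == 0)%N then x else y) else 0).
Definition Ag (b c : K) : 'M[K]_2 :=
  \matrix_(i < 2, j < 2) (if i == j then 0 else (if (val i == 0)%N then b else c)).

Lemma img_u_Dg x y : img_u (Dg x y) = mono 1 x.
Proof. by apply: functional_extensionality => s; rewrite /img_u /mono !mxE /=; case: s => [|[|s]]. Qed.
Lemma img_v_Dg x y : img_v (Dg x y) = mono 0 y.
Proof. by apply: functional_extensionality => s; rewrite /img_v /mono !mxE /=; case: s => [|[|s]]. Qed.
Lemma img_u_Ag b c : img_u (Ag b c) = mono 0 c.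
Proof. by apply: functional_extensionality => s; rewrite /img_u /mono !mxE /=; case: s => [|[|s]]. Qed.
Lemma img_v_Ag b c : img_v (Ag b c) = mono 1 b.
Proof. by apply: functional_extensionality => s; rewrite /img_v /mono !mxE /=; case: s => [|[|s]]. Qed.

Lemma trace_Dg x y m : trace_deg (Dg x y) m = \sum_(i < m.+1) x ^+ i * y ^+ (m - i).
Proof.
rewrite /trace_deg; apply: eq_bigr => i _.
rewrite /mono_img img_u_Dg img_v_Dg hpow1_mono1 hpow1_mono0 hmul_mono //.
by rewrite /mono addn0 eqxx subnn mul0n expr0 mul1r.
Qed.

Lemma trace_Ag b c m : trace_deg (Ag b c) m =
  \sum_(i < m.+1) (if (i:nat) == (m - i)%N then (-1) ^+ (i * (m - i)) * c ^+ i * b ^+ (m - i) else 0).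
Proof.
rewrite /trace_deg; apply: eq_bigr => i _.
by rewrite /mono_img img_u_Ag img_v_Ag hpow1_mono1 hpow1_mono0 hmul_mono // /mono add0n subn0.
Qed.


Ltac mx2 := apply/matrixP; case=> [[|[|//]]] ?; case=> [[|[|//]]] ?;
  rewrite !mxE ?big_ord_recr ?big_ord0 /= ?mxE /=.

Lemma mulDD (x1 y1 x2 y2 : K) : Dg x1 y1 *m Dg x2 y2 = Dg (x1*x2) (y1*y2).
Proof. by mx2; rewrite ?(mulr0,mul0r,add0r,addr0). Qed.
Lemma mulDA (x y b c : K) : Dg x y *m Ag b c = Ag (x*b) (y*c).
Proof. by mx2; rewrite ?(mulr0,mul0r,add0r,addr0). Qed.
Lemma mulAD (x y b c : K) : Ag b c *m Dg x y = Ag (b*y) (c*x).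
Proof. by mx2; rewrite ?(mulr0,mul0r,add0r,addr0). Qed.
Lemma mulAA (b1 c1 b2 c2 : K) : Ag b1 c1 *m Ag b2 c2 = Dg (b1*c2) (c1*b2).
Proof. by mx2; rewrite ?(mulr0,mul0r,add0r,addr0). Qed.
Lemma Dg11 : Dg 1 1 = 1%:M :> 'M[K]_2.
Proof. by mx2. Qed.
Lemma gen_diagE n k (w : K) : gen_diag n k w = Dg (w ^+ (2 * k)) (w ^- (2 * k)).
Proof. by []. Qed.
Lemma gen_antiE n k (w : K) : gen_anti n k w = Ag (w ^+ n) (w ^+ n).
Proof. by mx2. Qed.

Lemma qr_Dg (x y : K) : quasi_reflection (Dg x y) -> (x = 1 /\ y != 1) \/ (y = 1 /\ x != 1).
Proof.
case=> l [l1 H].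
have h1 := H 1%N; have h2 := H 2%N.
rewrite trace_Dg !big_ord_recr !big_ord0 /= in h1.
rewrite trace_Dg !big_ord_recr !big_ord0 /= in h2.
have e1 : y + x = 1 + l.
  by move: h1; rewrite !expr0 !expr1 !add0r !mul1r mulr1.
have e2 : y ^+ 2 + x * y + x ^+ 2 = 1 + l + l ^+ 2.
  by move: h2; rewrite !expr0 !expr1 !add0r subn0 mul1r mulr1.
have exy : x * y = l.
  have -> : x * y = (y+x)^+2 - (y^+2 + x*y + x^+2) by ring.
  by rewrite e1 e2; ring.
have : (x - 1) * (y - 1) = 0.
  have -> : (x-1)*(y-1) = x*y - (y + x) + 1 by ring.
  by rewrite exy e1; ring.
move/eqP; rewrite mulf_eq0 !subr_eq0 => /orP [/eqP ex|/eqP ey].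
  by left; split => //; move: exy; rewrite ex mul1r => ->.
by right; split => //; move: exy; rewrite ey mulr1 => ->.
Qed.

Lemma qr_Dg_wit (y : K) : y != 1 -> quasi_reflection (Dg 1 y).
Proof.
move=> hy; exists y; split => // m.
rewrite trace_Dg.
rewrite (eq_bigr (fun i : 'I_m.+1 => y ^+ (m - i))); last by move=> i _; rewrite expr1n mul1r.
rewrite -(big_mkord xpredT (fun i => y ^+ (m - i))) big_rev_mkord subn0.
by apply: eq_bigr => i _; rewrite subSS subKn // -ltnS.
Qed.

Lemma qr_Ag (b c : K) : quasi_reflection (Ag b c) -> c * b = -1.
Proof.
case=> l [l1 H].
have h1 := H 1%N; have h2 := H 2%N.
rewrite trace_Ag !big_ord_recr !big_ord0 /= in h1.
rewrite trace_Ag !big_ord_recr !big_ord0 /= in h2.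
move: h1; rewrite !add0r expr0 expr1 => /esym /eqP; rewrite addr_eq0 eq_sym eqr_oppLR => /eqP el.
have e21 : (2 - 1 = 1)%N by [].
move: h2; rewrite e21 el -[(1*1)%N]/1%N !expr1 !add0r !addr0 expr0 mulN1r sqrrN expr1n subrr add0r mulNr.
by move/eqP; rewrite eqr_oppLR => /eqP.
Qed.

Lemma alt_sum m : \sum_(i < m.+1) (-1 : K) ^+ i = if odd m then 0 else 1.
Proof.
elim: m => [|m IH]; first by rewrite big_ord1 expr0.
rewrite big_ord_recr /= IH -signr_odd /=.
by case: (odd m); rewrite /= ?expr0 ?expr1 ?add0r ?addrN.
Qed.

Lemma qr_Ag_wit (z : K) : z ^+ 2 = -1 -> (-1 != 1 :> K) -> quasi_reflection (Ag z z).
Proof.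
move=> hz hn1; exists (-1); split => // m.
rewrite trace_Ag alt_sum.
case ho: (odd m).
  apply: big1 => i _; have hi := ltn_ord i.
  case: eqP => // h; exfalso.
  have hm : m = (i + i)%N by lia.
  by move: ho; rewrite hm addnn odd_double.
have hm : m = (m./2 + m./2)%N by rewrite addnn -{1}(odd_double_half m) ho.
set l := m./2 in hm *.
rewrite (eq_bigr (fun i : 'I_m.+1 => if (i:nat) == l then (-1) ^+ (l * l) * z ^+ m else 0)); last first.
  move=> i _; have hi := ltn_ord i.
  case: (eqVneq (i:nat) l) => [e|ne].
    have eml : (m - l = l)%N by lia.
    by rewrite e eml eqxx -mulrA -exprD -hm.
  case: eqP => // h; exfalso; move/eqP: ne; apply; lia.
rewrite sum_deltac; last by lia.
rewrite hm addnn -mul2n (exprM z) hz -exprD -signr_odd oddD oddM.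
by case: (odd l).
Qed.

Section Inv.
Variables (d d' e h : K) (k : nat).
Hypotheses (hdd : d * d' = 1) (heh : e = h * h) (hek : e ^+ k = 1) (hk : (0 < k)%N).

Definition Inv (g : 'M[K]_2) := exists a b c : nat,
  g = Dg (d ^+ a * d' ^+ b * e ^+ c) (d' ^+ a * d ^+ b * e ^+ c) \/
  g = Ag (d ^+ a * d' ^+ b * e ^+ c * h) (d' ^+ a * d ^+ b * e ^+ c * h).

Lemma ddp a : d ^+ a * d' ^+ a = 1.
Proof. by rewrite -exprMn hdd expr1n. Qed.

Lemma eek c : e ^+ c * e ^+ (c * (k - 1)) = 1.
Proof.
rewrite -exprD (_ : (c + c * (k - 1) = k * c)%N); last by nia.
by rewrite exprM hek expr1n.
Qed.

Lemma inv_unique (g g' : 'M[K]_2) : g *m g' = 1%:M -> invmx g = g'.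
Proof.
move=> H; have [ug _] := mulmx1_unit H.
by rewrite -[invmx g]mulmx1 -H mulmxA mulVmx // mul1mx.
Qed.

Lemma Inv_mul g1 g2 : Inv g1 -> Inv g2 -> Inv (g1 *m g2).
Proof.
move=> [a1 [b1 [c1 [->|->]]]] [a2 [b2 [c2 [->|->]]]].
- exists (a1 + a2)%N, (b1 + b2)%N, (c1 + c2)%N; left; rewrite mulDD.
  by congr Dg; rewrite !exprD; ring.
- exists (a1 + a2)%N, (b1 + b2)%N, (c1 + c2)%N; right; rewrite mulDA.
  by congr Ag; rewrite !exprD; ring.
- exists (a1 + b2)%N, (b1 + a2)%N, (c1 + c2)%N; right; rewrite mulAD.
  by congr Ag; rewrite !exprD; ring.
- exists (a1 + b2)%N, (b1 + a2)%N, (c1 + c2).+1; left; rewrite mulAA.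
  by congr Dg; rewrite exprS !exprD heh; ring.
Qed.

Lemma Inv_inv g : Inv g -> Inv (invmx g).
Proof.
move=> [a [b [c [->|->]]]].
- exists b, a, (c * (k - 1))%N; left; apply: inv_unique; rewrite mulDD -Dg11.
  congr Dg.
    transitivity ((d ^+ a * d' ^+ a) * (d ^+ b * d' ^+ b) * (e ^+ c * e ^+ (c * (k - 1)))); first by ring.
    by rewrite !ddp eek !mulr1.
  transitivity ((d ^+ a * d' ^+ a) * (d ^+ b * d' ^+ b) * (e ^+ c * e ^+ (c * (k - 1)))); first by ring.
  by rewrite !ddp eek !mulr1.
- exists a, b, (c.+1 * (k - 1))%N; right; apply: inv_unique; rewrite mulAA -Dg11.
  congr Dg.
    transitivity ((d ^+ a * d' ^+ a) * (d ^+ b * d' ^+ b) * (e ^+ c.+1 * e ^+ (c.+1 * (k - 1)))).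
      by rewrite exprS heh; ring.
    by rewrite !ddp eek !mulr1.
  transitivity ((d ^+ a * d' ^+ a) * (d ^+ b * d' ^+ b) * (e ^+ c.+1 * e ^+ (c.+1 * (k - 1)))).
    by rewrite exprS heh; ring.
  by rewrite !ddp eek !mulr1.
Qed.

Lemma Inv_gen g : gen_by (fun g => g = Dg d d' \/ g = Ag h h) g -> Inv g.
Proof.
elim => {g}.
- by exists 0%N, 0%N, 0%N; left; rewrite !expr0 !mulr1 Dg11.
- move=> g [->|->].
    by exists 1%N, 0%N, 0%N; left; rewrite !expr0 !expr1 !mulr1.
  by exists 0%N, 0%N, 0%N; right; rewrite !expr0 !mul1r.
- by move=> g1 g2 _ h1 _ h2; apply: Inv_mul.
- by move=> g _ h1; apply: Inv_inv.
Qed.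

Lemma gen_Dgee c : gen_by (fun g => g = Dg d d' \/ g = Ag h h) (Dg (e ^+ c) (e ^+ c)).
Proof.
elim: c => [|c IH]; first by rewrite expr0 Dg11; apply: gen_one.
rewrite (_ : Dg (e ^+ c.+1) (e ^+ c.+1) = Ag h h *m Ag h h *m Dg (e ^+ c) (e ^+ c)).
  by apply: gen_mul => //; apply: gen_mul; apply: gen_in; right.
by rewrite mulAA mulDD heh !exprS.
Qed.

Lemma gen_Dgde a c : gen_by (fun g => g = Dg d d' \/ g = Ag h h) (Dg (d ^+ a * e ^+ c) (d' ^+ a * e ^+ c)).
Proof.
elim: a => [|a IH]; first by rewrite !expr0 !mul1r; apply: gen_Dgee.
rewrite (_ : Dg (d ^+ a.+1 * e ^+ c) (d' ^+ a.+1 * e ^+ c) = Dg d d' *m Dg (d ^+ a * e ^+ c) (d' ^+ a * e ^+ c)).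
  by apply: gen_mul => //; apply: gen_in; left.
by rewrite mulDD !exprS !mulrA.
Qed.

Lemma gen_Agh c : gen_by (fun g => g = Dg d d' \/ g = Ag h h) (Ag (e ^+ c * h) (e ^+ c * h)).
Proof.
rewrite (_ : Ag (e ^+ c * h) (e ^+ c * h) = Ag h h *m Dg (e ^+ c) (e ^+ c)).
  by apply: gen_mul; [apply: gen_in; right | apply: gen_Dgee].
by rewrite mulAD mulrC.
Qed.

End Inv.

Lemma gen_by_mono (S S' : 'M[K]_2 -> Prop) g : (forall g, S g -> S' g) -> gen_by S g -> gen_by S' g.
Proof.
move=> hS; elim => {g}.
- exact: gen_one.
- by move=> g /hS; apply: gen_in.
- by move=> g1 g2 _ h1 _ h2; apply: gen_mul.
- by move=> g _ h1; apply: gen_inv.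
Qed.


End Tr.


Unset Implicit Arguments.

Theorem mainTheorem5 (K : closedFieldType) (charK0 : [pchar K] =i pred0)
  (n k : nat) (hn : (0 < n)%N) (hk : (0 < k)%N)
  (w : K) (hw : (2 * n * k)%N.-primitive_root w) :
  (forall g : 'M[K]_2, G_nk n k w g -> ~ quasi_reflection g) <->
  (k %% 4 != 2)%N /\ (gcdn n k <= 2)%N.
Proof.
have Npos : (0 < 2 * n * k)%N by rewrite !muln_gt0 hn hk.
have w1 : w ^+ (2 * n * k) = 1 := prim_expr_order hw.
have wnz : w != 0.
  apply/eqP => w0; move: w1; rewrite w0 expr0n; case: eqP => [h|_]; first by move: Npos; rewrite h.
  by move/eqP; rewrite eq_sym oner_eq0.
set d := w ^+ (2 * k); set d' := w ^- (2 * k); set e := w ^+ (2 * n); set h := w ^+ n.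
have dnz : d != 0 by rewrite expf_neq0.
have hdd : d * d' = 1 by rewrite /d' mulfV.
have heh : e = h * h by rewrite -exprD addnn -mul2n.
have hek : e ^+ k = 1 by rewrite -exprM.
have hd' : d' = w ^+ (2 * k * (n - 1)).
  apply: (mulfI dnz); rewrite hdd -exprD.
  rewrite (_ : (2 * k + 2 * k * (n - 1) = 2 * n * k)%N) //.
  case: (n) hn => [//|n'] _; rewrite subn1 /=; ring.
have m1n1 : (-1 : K) != 1.
  apply/negP => /eqP h1.
  have : (2%:R : K) == 0 by rewrite mulr2n -{2}h1 subrr.
  by rewrite ((pcharf0P K).1 charK0 2).
set S := fun g : 'M[K]_2 => g = Dg d d' \/ g = Ag h h.
have toS : forall g, G_nk n k w g -> gen_by S g.
  move=> g; apply: gen_by_mono => g0 [->|->]; [by left | by right; rewrite gen_antiE].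
have ofS : forall g, gen_by S g -> G_nk n k w g.
  move=> g; apply: gen_by_mono => g0 [->|->]; [by left | by right; rewrite gen_antiE].
split.
- move=> H; split.
  + apply/negP => /eqP k4.
    have hkq : k = (4 * (k %/ 4) + 2)%N by rewrite {1}(divn_eq k 4) k4; lia.
    set q := (k %/ 4)%N in hkq.
    have wnk : w ^+ (n * k) = -1.
      have : (w ^+ (n * k)) ^+ 2 == 1 by rewrite -exprM (_ : (n * k * 2 = 2 * n * k)%N) ?w1 //; ring.
      rewrite sqrf_eq1 => /orP [/eqP h1|/eqP //].
      exfalso; move: h1 => /eqP; rewrite -(prim_order_dvd hw) => /dvdn_leq.
      rewrite muln_gt0 hn hk => /(_ isT); rewrite -mulnA; nia.
    have hz : (e ^+ q * h) ^+ 2 = -1.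
      rewrite exprMn -exprM expr2 -heh -exprSr /e -exprM -wnk.
      by congr (w ^+ _); rewrite hkq; ring.
    apply: (H (Ag (e ^+ q * h) (e ^+ q * h))).
      by apply: ofS; apply: gen_Agh.
    exact: qr_Ag_wit.
  + rewrite leqNgt; apply/negP => hg.
    set n1 := (n %/ gcdn n k)%N; set c := (k %/ gcdn n k * (gcdn n k - 1))%N.
    have x1 : d ^+ n1 * e ^+ c = 1.
      by rewrite /d /e -!exprM -exprD nt_gcd1.
    have y1 : d' ^+ n1 * e ^+ c != 1.
      apply/negP => /eqP y1.
      have enz : e ^+ c != 0 by apply/negP => /eqP ez; move: x1; rewrite ez mulr0 => /eqP; rewrite eq_sym oner_eq0.
      have dd : d ^+ n1 = d' ^+ n1 by apply: (mulIf enz); rewrite x1 y1.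
      have : d ^+ (2 * n1) == 1 by rewrite mul2n -addnn exprD {2}dd (ddp hdd).
      rewrite /d -exprM -(prim_order_dvd hw).
      by move: (nt_gcd2 n k hn hk hg); rewrite /n1 => /negPf ->.
    apply: (H (Dg (d ^+ n1 * e ^+ c) (d' ^+ n1 * e ^+ c))).
      by apply: ofS; apply: gen_Dgde.
    by rewrite x1; apply: qr_Dg_wit.
- move=> [k4 hg] g Gg QR.
  have [a [b [c [E|E]]]] := Inv_gen hdd heh hek hk (toS _ Gg); rewrite {}E in QR.
  + have eX : forall a b, d ^+ a * d' ^+ b * e ^+ c = w ^+ (2 * k * a + 2 * k * (n - 1) * b + 2 * n * c).
      by move=> a0 b0; rewrite hd' /d /e -!exprM -!exprD.
    have eY : d' ^+ a * d ^+ b * e ^+ c = d ^+ b * d' ^+ a * e ^+ c by rewrite (mulrC (d' ^+ a)).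
    rewrite eY !eX in QR.
    case: (qr_Dg QR) => [[x1 y1]|[y1 x1]].
    * move/negP: y1; apply; apply/eqP/eqP; rewrite -(prim_order_dvd hw).
      by apply: nt_diag => //; rewrite (prim_order_dvd hw) x1.
    * move/negP: x1; apply; apply/eqP/eqP; rewrite -(prim_order_dvd hw).
      by apply: nt_diag => //; rewrite (prim_order_dvd hw) y1.
  + have CB := qr_Ag QR.
    have CBe : w ^+ (2 * n * (2 * c + 1)) = -1.
      rewrite -CB.
      transitivity ((d ^+ a * d' ^+ a) * (d ^+ b * d' ^+ b) * (e ^+ c * e ^+ c * (h * h))); last by ring.
      rewrite !(ddp hdd) -heh -exprD -exprSr !mul1r /e -exprM.
      by congr (w ^+ _); ring.
    move/eqP: k4; apply; apply: (@nt_anti k c).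
      rewrite -(@dvdn_pmul2l (2 * n)) ?muln_gt0 ?hn // (prim_order_dvd hw).
      rewrite (_ : (2 * n * (2 * (2 * c + 1)) = 2 * n * (2 * c + 1) * 2)%N); last by ring.
      by rewrite exprM CBe sqrrN expr1n.
    rewrite -(@dvdn_pmul2l (2 * n)) ?muln_gt0 ?hn // (prim_order_dvd hw) CBe.
    exact: m1n1.
Qed.
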